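(* The top cycle satisfies the TS-exclusive monotonicity criterion and the TS-exclusive negative monotonicity (ENM) criterion.
   Context: A tournament $T=(V(T),\succ)$ is a finite set of candidates with an asymmetric and complete binary relation $\succ$. $N^+_T(c)=\{b: c\succ b\}$; $T[B]$ is the subtournament induced by $B$. The top cycle $TC(T)$ is the unique minimal nonempty subset $X\subseteq V(T)$ such that $x\succ y$ for every $x\in X$ and every $y\in V(T)\setminus X$. For a tournament solution $f$ (a map sending every tournament $T$ to a nonempty subset of $V(T)$), say $(T,T')$ with $T=(\mathcal{C},\succ)$, $T'=(\mathcal{C},\succ')$ is a $c$-improvement if $T[\mathcal{C}\setminus\{c\}]=T'[\mathcal{C}\setminus\{c\}]$ and $N^+_T(c)\subseteq N^+_{T'}(c)$. - $f$ is TS-exclusive monotonic if for every $c$-improvement $(T,T')$ with $c\in f(T)$, we have $c\in f(T')$ and $f(T')\subseteq f(T)$. - $f$ satisfies TS-ENM if for every $c$-improvement $(T,T')$ with $c\notin f(T)$, $f(T')\not\subseteq f(T)$ implies $c\in f(T')$. *)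

(* Defs.v *)
From mathcomp Require Import all_boot.
Set Implicit Arguments. Unset Strict Implicit. Unset Printing Implicit Defensive.

Record tournament (C : finType) := Tournament {
  beats : rel C;
  beats_asym : forall x y, beats x y -> ~~ beats y x;
  beats_total : forall x y, x != y -> beats x y || beats y x
}.

Definition outnb (C : finType) (T : tournament C) (c : C) : {set C} :=
  [set b | beats T c b].

Definition dominantb (C : finType) (T : tournament C) (X : {set C}) : bool :=
  [forall x in X, forall y in ~: X, beats T x y].

Definition is_top_cycleb (C : finType) (T : tournament C) (X : {set C}) : bool :=
  [&& X != set0, dominantb T X &
      [forall Y : {set C},
         [&& Y != set0, dominantb T Y & Y \subset X] ==> (Y == X)]].

(* The top cycle: the (unique) minimal nonempty dominant set.
   The default [set: C] is never used, since such a set always exists. *)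
Definition top_cycle (C : finType) (T : tournament C) : {set C} :=
  odflt [set: C] [pick X : {set C} | is_top_cycleb T X].

Definition c_improvement (C : finType) (c : C) (T T' : tournament C) : Prop :=
  (forall x y, x != c -> y != c -> beats T x y = beats T' x y) /\
  outnb T c \subset outnb T' c.

Definition tournament_solution :=
  forall C : finType, tournament C -> {set C}.

Definition TS_exclusive_monotonic (f : tournament_solution) : Prop :=
  forall (C : finType) (c : C) (T T' : tournament C),
    c_improvement c T T' -> c \in f C T ->
    c \in f C T' /\ f C T' \subset f C T.

Definition TS_ENM (f : tournament_solution) : Prop :=
  forall (C : finType) (c : C) (T T' : tournament C),
    c_improvement c T T' -> c \notin f C T ->
    ~~ (f C T' \subset f C T) -> c \in f C T'.

(* Main.v *)
Require Import Defs.
From mathcomp Require Import all_boot.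

Section TC.
Variables (C : finType) (T : tournament C).

Lemma domP (X : {set C}) :
  reflect (forall x y, x \in X -> y \notin X -> beats T x y) (dominantb T X).
Proof.
apply: (iffP forallP) => [H x y xX yX | H x].
  by move: (H x); rewrite xX /= => /forallP /(_ y); rewrite in_setC yX.
apply/implyP => xX; apply/forallP => y; apply/implyP; rewrite in_setC.
exact: H.
Qed.

Lemma dom_nested (X D : {set C}) : dominantb T X -> dominantb T D ->
  X \subset D \/ D \subset X.
Proof.
move=> /domP HX /domP HD.
case: (boolP (X \subset D)) => [|/subsetPn [x xX xD]]; first by left.
right; apply/subsetP => d dD; apply/negPn/negP => dX.
have h1 := HX x d xX dX; have h2 := HD d x dD xD.
by move: (beats_asym h1); rewrite h2.
Qed.

Lemma tc_spec (c : C) :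
  [/\ top_cycle T != set0, dominantb T (top_cycle T) &
     forall D, D != set0 -> dominantb T D -> top_cycle T \subset D].
Proof.
rewrite /top_cycle; case: pickP => [X /and3P [nX dX /forallP mX] | none] /=.
  split => // D nD dD.
  case: (dom_nested _ _ dX dD) => // DX.
  by move: (mX D); rewrite nD dD DX /= => /eqP ->.
exfalso.
have P0 : [pred X : {set C} | (X != set0) && dominantb T X] [set: C].
  rewrite /= /dominantb; apply/andP; split.
    by apply/set0Pn; exists c; rewrite inE.
  by apply/forallP => x; apply/implyP => _; apply/forallP => y; rewrite setCT inE.
have [A /minsetP [/andP [nA dA] mA] _] := minset_exists P0.
move: (none A); rewrite /is_top_cycleb nA dA /=.
move/negP; apply; apply/forallP => Y; apply/implyP => /and3P [nY dY YA].
by apply/eqP; apply: mA => //=; rewrite nY dY.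
Qed.
End TC.

Lemma imp_dom1 (C : finType) (c : C) (T T' : tournament C) (D : {set C}) :
  c_improvement c T T' -> dominantb T D -> c \in D -> dominantb T' D.
Proof.
move=> [Hs /subsetP Ho] /domP HD cD; apply/domP => x y xD yD.
have yc : y != c by apply: contraNneq yD => ->.
have := HD x y xD yD.
case: (eqVneq x c) => [-> | xc]; first by move=> h; have := Ho y; rewrite !inE; apply.
by rewrite Hs.
Qed.

Lemma imp_dom2 (C : finType) (c : C) (T T' : tournament C) (D : {set C}) :
  c_improvement c T T' -> dominantb T' D -> c \notin D -> dominantb T D.
Proof.
move=> [Hs /subsetP Ho] /domP HD cD; apply/domP => x y xD yD.
have xc : x != c by apply: contraNneq cD => <-.
have := HD x y xD yD.
case: (eqVneq y c) => [-> | yc]; last by rewrite Hs.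
move=> h; have := beats_total T xc; case/orP => // h2.
have := Ho x; rewrite !inE h2 => /(_ isT) h3.
by move: (beats_asym h); rewrite h3.
Qed.

Theorem lemma1 :
  TS_exclusive_monotonic top_cycle /\ TS_ENM top_cycle.
Proof.
split.
- move=> C c T T' Hi cX.
  have [nX dX mX] := tc_spec C T c.
  have [nY dY mY] := tc_spec C T' c.
  have YX := mY _ nX (imp_dom1 _ _ _ _ _ Hi dX cX).
  split => //.
  apply/negPn/negP => cY.
  have XY := mX _ nY (imp_dom2 _ _ _ _ _ Hi dY cY).
  by move: cY; rewrite (subsetP XY).
- move=> C c T T' Hi cX nYX.
  have [nX dX mX] := tc_spec C T c.
  have [nY dY mY] := tc_spec C T' c.
  apply/negPn/negP => cY.
  have XY := mX _ nY (imp_dom2 _ _ _ _ _ Hi dY cY).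
  have dX' : dominantb T' (top_cycle T).
    case: Hi => [Hs Ho].
    move/domP: dX => HX; move/domP: dY => HY; apply/domP => x y xX yX.
    have xc : x != c by apply: contraNneq cX => <-.
    case: (eqVneq y c) => [-> | yc]; last by rewrite -Hs //; apply: HX.
    by apply: HY => //; apply: (subsetP XY).
  by move: nYX; rewrite (mY _ nX dX').
Qed.
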